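(* Every (fork, co-cricket)-free graph $G$ satisfies $\chi(G)\le\omega(G)^2$.
   Context: All graphs are finite and simple; $\chi$ is chromatic number, $\omega$ clique number. The fork is obtained from $K_{1,3}$ by subdividing one edge once. The co-cricket is the disjoint union of a diamond ($K_4$ minus an edge) and an isolated vertex. $G$ is $(H_1,H_2)$-free if it has no induced subgraph isomorphic to $H_1$ or $H_2$. *)

(* Defs.v *)
From mathcomp Require Import all_boot.
Set Implicit Arguments. Unset Strict Implicit. Unset Printing Implicit Defensive.

Definition simple_graph (T : finType) (e : rel T) : Prop :=
  symmetric e /\ irreflexive e.

Definition induces (T : finType) (e : rel T) (k : nat) (h : rel 'I_k) : Prop :=
  exists f : 'I_k -> T, injective f /\ forall i j, e (f i) (f j) = h i j.

Definition rel_of_edges (n : nat) (E : seq (nat * nat)) : rel 'I_n :=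
  fun i j => ((nat_of_ord i, nat_of_ord j) \in E) || ((nat_of_ord j, nat_of_ord i) \in E).

(* Fork: K_{1,3} with centre 0, leaves 1,2,3, edge 0-3 subdivided by 4. *)
Definition fork : rel 'I_5 :=
  @rel_of_edges 5 [:: (0,1); (0,2); (0,4); (4,3)].

(* Co-cricket: diamond on {0,1,2,3} (K4 minus edge 2-3) plus isolated vertex 4. *)
Definition cocricket : rel 'I_5 :=
  @rel_of_edges 5 [:: (0,1); (0,2); (0,3); (1,2); (1,3)].

Definition free_of (T : finType) (e : rel T) (k : nat) (h : rel 'I_k) : Prop :=
  ~ induces e h.

Definition is_clique (T : finType) (e : rel T) (K : {set T}) : bool :=
  [forall x in K, forall y in K, (x != y) ==> e x y].

Definition clique_number (T : finType) (e : rel T) : nat :=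
  \max_(K : {set T} | is_clique e K) #|K|.

Definition proper_colouring (T : finType) (e : rel T) (k : nat) (c : T -> 'I_k) : Prop :=
  forall x y, e x y -> c x != c y.

Definition colourable (T : finType) (e : rel T) (k : nat) : Prop :=
  exists c : T -> 'I_k, proper_colouring e c.

(* chromatic number chi(G): least k with a proper k-colouring
   (exists since #|T| colours always suffice for a loopless graph). *)
Definition is_chromatic_number (T : finType) (e : rel T) (k : nat) : Prop :=
  colourable e k /\ forall j, colourable e j -> k <= j.

(* Main.v *)
Require Import Defs.
From mathcomp Require Import all_boot zify.
Set Implicit Arguments. Unset Strict Implicit. Unset Printing Implicit Defensive.

Definition col (T : finType) (e : rel T) (S : {set T}) (k : nat) :=
  exists c : T -> nat, (forall x, x \in S -> c x < k) /\
    (forall x y, x \in S -> y \in S -> e x y -> c x != c y).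

Lemma col0 (T : finType) (e : rel T) (S : {set T}) k : S = set0 -> col e S k.
Proof. move=> ->; exists (fun _ => 0); split => x; by rewrite inE. Qed.

Lemma col_sub (T : finType) (e : rel T) (S S' : {set T}) k k' :
  col e S k -> S' \subset S -> k <= k' -> col e S' k'.
Proof.
move=> [c [Hc Hp]] /subsetP sub kk; exists c; split.
  by move=> x /sub /Hc /leq_trans; apply.
by move=> x y /sub xS /sub yS; apply: Hp.
Qed.

Lemma col_union (T : finType) (e : rel T) (S S1 S2 : {set T}) k1 k2 :
  col e S1 k1 -> col e S2 k2 -> S \subset S1 :|: S2 -> col e S (k1 + k2).
Proof.
move=> [c1 [H1 P1]] [c2 [H2 P2]] /subsetP sub.
exists (fun x => if x \in S1 then c1 x else k1 + c2 x); split.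
  move=> x /sub; rewrite inE; case: ifP => [xS1 _|xS1 /= xS2].
    by apply: leq_trans (H1 _ xS1) (leq_addr _ _).
  by rewrite ltn_add2l H2.
move=> x y /sub xS /sub yS exy; move: xS yS; rewrite !inE.
case: ifP => xS1; case: ifP => yS1 /=.
- by move=> _ _; apply: P1.
- move=> _ _; apply/eqP => E; have := H1 _ xS1; rewrite E; by rewrite ltnNge leq_addr.
- move=> _ _; apply/eqP => E; have := H1 _ yS1; rewrite -E; by rewrite ltnNge leq_addr.
- move=> xS2 yS2; rewrite eqn_add2l; by apply: P2.
Qed.

Lemma col_split (T : finType) (e : rel T) (S X : {set T}) k :
  symmetric e ->
  col e X k -> col e (S :\: X) k ->
  (forall p q, p \in S -> q \in S -> p \in X -> q \notin X -> ~~ e p q) -> col e S k.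
Proof.
move=> Hs [c1 [H1 P1]] [c2 [H2 P2]] sep.
exists (fun x => if x \in X then c1 x else c2 x); split.
  move=> x xS; case: ifP => xX; first by apply: H1.
  by apply: H2; rewrite inE xX.
move=> x y xS yS exy; case: ifP => xX; case: ifP => yX.
- by apply: P1.
- by move: (sep x y xS yS xX); rewrite yX exy => /(_ isT).
- by move: (sep y x yS xS yX); rewrite xX Hs exy => /(_ isT).
- by apply: P2; rewrite // inE ?xX ?yX.
Qed.

Lemma col_ext (T : finType) (e : rel T) (S : {set T}) v k :
  symmetric e -> irreflexive e -> v \in S -> #|[set y in S | e v y]| < k -> col e (S :\ v) k -> col e S k.
Proof.
move=> Hs Hi vS Hlt [c [Hc Hp]].
set N := [set y in S | e v y].
have [n nk nN] : exists2 n, n < k & n \notin map c (enum N).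
  case: (boolP [exists n : 'I_k, (val n) \notin map c (enum N)]).
    by case/existsP => n Hn; exists (nat_of_ord n); [exact: ltn_ord | exact: Hn].
  move/existsPn => all_in.
  have sub : {subset iota 0 k <= map c (enum N)}.
    move=> m; rewrite mem_iota add0n => /andP [_ mk].
    by have := all_in (Ordinal mk); rewrite negbK.
  have := uniq_leq_size (iota_uniq 0 k) sub.
  by rewrite size_iota size_map -cardE leqNgt Hlt.
exists (fun x => if x == v then n else c x); split.
  move=> x xS; case: ifP => // /negbT xv; apply: Hc; by rewrite !inE xv.
move=> x y xS yS exy.
have yN : forall y, y \in S -> e v y -> c y \in map c (enum N).
  by move=> z zS ez; apply: map_f; rewrite mem_enum inE zS ez.
case: ifP => [/eqP xv|/negbT xv]; case: ifP => [/eqP yv|/negbT yv].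
- by move: exy; rewrite xv yv Hi.
- subst x; apply/eqP => E; move: nN; by rewrite E yN.
- subst y; apply/eqP => E; move: nN; by rewrite -E yN // Hs.
- by apply: Hp; rewrite // !inE ?xv ?yv.
Qed.


Lemma clique_add (T : finType) (e : rel T) (K : {set T}) a :
  symmetric e -> irreflexive e -> is_clique e K -> (forall y, y \in K -> e a y) ->
  is_clique e (a |: K) /\ #|a |: K| = #|K|.+1.
Proof.
move=> Hs Hi /forallP HK Ha; split; last first.
  rewrite cardsU1; case: (boolP (a \in K)) => // /Ha; by rewrite Hi.
apply/forallP => u; apply/implyP; rewrite !inE => /orP [/eqP->|uK];
  apply/forallP => v; apply/implyP; rewrite !inE => /orP [/eqP->|vK]; apply/implyP.
- by rewrite eqxx.
- by move=> _; apply: Ha.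
- by move=> _; rewrite Hs; apply: Ha.
- by move=> uv; move: (HK u) => /implyP /(_ uK) /forallP /(_ v) /implyP /(_ vK) /implyP; apply.
Qed.

Lemma pick_two_nonadj (T : finType) (e : rel T) (R : {set T}) :
  ~~ is_clique e R -> exists s1 s2, [/\ s1 \in R, s2 \in R, s1 != s2 & ~~ e s1 s2].
Proof.
case/forallPn => s1; rewrite negb_imply => /andP [s1R /forallPn [s2]].
rewrite negb_imply => /andP [s2R]; rewrite negb_imply => /andP [ne ns].
by exists s1, s2.
Qed.

Lemma three (T : finType) (A : {set T}) : 2 < #|A| ->
  exists a1 a2 a3, [/\ a1 \in A, a2 \in A, a3 \in A & [&& a1 != a2, a1 != a3 & a2 != a3]].
Proof.
move=> H.
have /set0Pn [a1 a1A] : A != set0 by rewrite -card_gt0; apply: leq_trans H.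
have H1 : 1 < #|A :\ a1| by move: H; rewrite (cardsD1 a1 A) a1A.
have /set0Pn [a2] : A :\ a1 != set0 by rewrite -card_gt0; apply: leq_trans H1.
rewrite !inE => /andP [a21 a2A].
have H2 : 0 < #|A :\ a1 :\ a2| by move: H1; rewrite (cardsD1 a2 (A :\ a1)) !inE a21 a2A.
have /set0Pn [a3] : A :\ a1 :\ a2 != set0 by rewrite -card_gt0.
rewrite !inE => /and3P [a32 a31 a3A].
exists a1, a2, a3; split => //; rewrite eq_sym a21 eq_sym a31 eq_sym a32 //.
Qed.


Definition forkfree (T : finType) (e : rel T) := forall x0 x1 x2 x3 x4 : T,
  x1 != x2 -> e x0 x1 -> e x0 x2 -> e x0 x4 -> e x4 x3 ->
  ~~ e x1 x2 -> ~~ e x1 x3 -> ~~ e x1 x4 -> ~~ e x2 x3 -> ~~ e x2 x4 -> ~~ e x0 x3 -> False.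
Definition clq_le (T : finType) (e : rel T) (S : {set T}) w :=
  forall K : {set T}, K \subset S -> is_clique e K -> #|K| <= w.
Definition dfree (T : finType) (e : rel T) (S : {set T}) := forall a b c d,
  a \in S -> b \in S -> c \in S -> d \in S -> c != d ->
  e a b -> e a c -> e a d -> e b c -> e b d -> e c d.

Lemma common_small (T : finType) (e : rel T) (S : {set T}) w a b :
  symmetric e -> irreflexive e -> dfree e S -> clq_le e S w.+1 ->
  a \in S -> b \in S -> e a b -> #|[set y in S | e a y && ((y == b) || e b y)]| <= w.
Proof.
move=> Hs Hi Hd Hc aS bS ab.
set Q := [set y in S | _].
have cQ : is_clique e Q.
  apply/forallP => u; apply/implyP; rewrite inE => /andP [uS /andP [au bu]].
  apply/forallP => v; apply/implyP; rewrite inE => /andP [vS /andP [av bv]].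
  apply/implyP => uv.
  case/orP: bu => [/eqP ub|bu].
    subst u; case/orP: bv => [/eqP vb|//]; by rewrite vb eqxx in uv.
  case/orP: bv => [/eqP vb|bv]; first by subst v; rewrite Hs.
  exact: (Hd a b u v).
have aQ : forall y, y \in Q -> e a y by move=> y; rewrite inE => /andP [_ /andP [->]].
have [cQ' cardQ] := clique_add Hs Hi cQ aQ.
have : #|a |: Q| <= w.+1.
  apply: Hc cQ'; apply/subsetP => y; rewrite !inE => /orP [/eqP->//|/andP [] //].
by rewrite cardQ.
Qed.

Lemma notri (T : finType) (e : rel T) (S : {set T}) w :
  symmetric e -> irreflexive e -> forkfree e -> dfree e S -> clq_le e S w.+1 ->
  (forall v, v \in S -> w.*2 < #|[set y in S | e v y]|) ->
  forall x q1 q2, x \in S -> q1 \in S -> q2 \in S -> e x q1 -> e x q2 -> e q1 q2 -> False.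
Proof.
move=> Hs Hi Hf Hd Hc Hdeg x q1 q2 xS q1S q2S xq1 xq2 q12.
have cq := common_small Hs Hi Hd Hc xS q1S xq1.
set Q := [set y in S | _] in cq.
set N := [set y in S | e x y].
have HN := Hdeg x xS; rewrite -/N in HN.
have HR : w < #|N :\: Q|.
  have h1 := cardsID Q N.
  have h2 : #|N :&: Q| <= #|Q| := subset_leq_card (subsetIr N Q).
  move: HN; rewrite -addnn => HN; lia.
have : ~~ is_clique e (N :\: Q).
  apply/negP => cR.
  have xR : forall y, y \in N :\: Q -> e x y by move=> y; rewrite !inE => /andP [_ /andP [_ ->]].
  have [cR' cardR] := clique_add Hs Hi cR xR.
  have : #|x |: (N :\: Q)| <= w.+1.
    apply: Hc cR'; apply/subsetP => y; rewrite !inE => /orP [/eqP->//|/andP [_ /andP [] //]].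
  by rewrite cardR ltnNge HR.
case/pick_two_nonadj => s1 [s2 [s1R s2R ns12 n12]].
have getR : forall s, s \in N :\: Q -> [/\ s \in S, e x s, s != q1, ~~ e q1 s & ~~ e q2 s].
  move=> s; rewrite !inE => /andP [sQ /andP [sS xs]]; move: sQ; rewrite sS xs /= negb_or => /andP [sq1 nq1s].
  split => //; apply/negP => q2s; move/negP: nq1s; apply.
  by apply: (Hd x q2 q1 s) => //; first [by rewrite Hs | by rewrite eq_sym].
have [s1S xs1 s1q1 nq1s1 nq2s1] := getR s1 s1R.
have [s2S xs2 s2q1 nq1s2 nq2s2] := getR s2 s2R.
have q1x : e q1 x by rewrite Hs.
have cz := common_small Hs Hi Hd Hc q1S xS q1x.
set Z := [set y in S | _] in cz.
set N1 := [set y in S | e q1 y].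
have /subsetPn [z zN1 zZ] : ~~ (N1 \subset Z).
  apply/negP => /subset_leq_card h; move: (Hdeg q1 q1S) => hd.
  by have := leq_trans (leq_trans h cz) (leq_addr w w); rewrite addnn leqNgt hd.
move: zN1 zZ; rewrite !inE => /andP [zS q1z]; rewrite zS q1z /= negb_or => /andP [zx nxz].
have nzq2 : ~~ e z q2.
  apply/negP => zq2; move/negP: nxz; apply.
  by apply: (Hd q1 q2 x z) => //; first [by rewrite Hs | by rewrite eq_sym].
have key : forall s s', s \in S -> s' \in S -> s != s' -> e x s -> e x s' -> ~~ e s s' ->
    ~~ e q1 s -> ~~ e q1 s' -> ~~ e q2 s -> ~~ e q2 s' -> e z s.
  move=> s s' sS s'S ss' xs xs' nss' nq1s nq1s' nq2s nq2s'.
  case Hzs: (e z s) => //; case Hzs': (e z s').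
  - exfalso; apply: (Hf x q2 s z s') => //.
    + by apply/eqP => E; subst s; move/negP: nq1s; apply.
    + by rewrite Hs Hzs'.
    + by rewrite Hs nzq2.
    + by rewrite Hs Hzs.
  - exfalso; apply: (Hf x s s' z q1) => //.
    + by rewrite Hs Hzs.
    + by rewrite Hs.
    + by rewrite Hs Hzs'.
    + by rewrite Hs.
have zs1 := key s1 s2 s1S s2S ns12 xs1 xs2 n12 nq1s1 nq1s2 nq2s1 nq2s2.
have ns21 : s2 != s1 by rewrite eq_sym.
have n21 : ~~ e s2 s1 by rewrite Hs.
have zs2 := key s2 s1 s2S s1S ns21 xs2 xs1 n21 nq1s2 nq1s1 nq2s2 nq2s1.
apply: (Hf z s1 s2 q2 q1) => //; by rewrite Hs.
Qed.


Definition trifree (T : finType) (e : rel T) (S : {set T}) := forall p q r,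
  p \in S -> q \in S -> r \in S -> e p q -> e q r -> e p r -> False.

Lemma ball (T : finType) (e : rel T) (S : {set T}) x :
  symmetric e -> irreflexive e -> forkfree e -> trifree e S -> x \in S ->
  2 < #|[set y in S | e x y]| ->
  exists X : {set T}, [/\ x \in X, col e X 2 &
     forall p q, p \in S -> q \in S -> p \in X -> q \notin X -> ~~ e p q].
Proof.
move=> Hs Hi Hf Ht xS H3.
set A := [set y in S | e x y] in H3.
have [a1 [a2 [a3 [a1A a2A a3A /and3P [d12 d13 d23]]]]] := three H3.
have inA : forall y, (y \in A) = (y \in S) && e x y by move=> y; rewrite inE.
have Aind : forall p q, p \in A -> q \in A -> ~~ e p q.
  move=> p q; rewrite !inA => /andP [pS xp] /andP [qS xq]; apply/negP => pq.
  by apply: (Ht x p q).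
set B := [set y in S | (y != x) && (y \notin A) && [exists u in A, e u y]].
have inB : forall y, (y \in B) = [&& y \in S, y != x, y \notin A & [exists u in A, e u y]].
  by move=> y; rewrite inE -!andbA.
have B1 : forall y a b, y \in B -> a \in A -> b \in A -> a != b -> e y a || e y b.
  move=> y a b; rewrite inB => /and4P [yS yx yA /existsP [u /andP [uA uy]]] aA bA ab.
  case Ha: (e y a) => //; case Hb: (e y b) => //=; exfalso.
  have ua : u != a by apply/eqP => E; subst u; by rewrite Hs Ha in uy.
  have ub : u != b by apply/eqP => E; subst u; by rewrite Hs Hb in uy.
  move: (aA) (bA) (uA); rewrite !inA => /andP [aS xa] /andP [bS xb] /andP [uS xu].
  apply: (Hf x a b y u) => //.
  - by apply: Aind.
  - by rewrite Hs Ha.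
  - by apply: Aind.
  - by rewrite Hs Hb.
  - by apply: Aind.
  - by rewrite inA yS in yA.
have B2 : forall y y', y \in B -> y' \in B -> ~~ e y y'.
  move=> y y' yB y'B; apply/negP => yy'.
  have h1 := B1 y a1 a2 yB a1A a2A d12; have h2 := B1 y a1 a3 yB a1A a3A d13.
  have h3 := B1 y a2 a3 yB a2A a3A d23; have h4 := B1 y' a1 a2 y'B a1A a2A d12.
  have h5 := B1 y' a1 a3 y'B a1A a3A d13; have h6 := B1 y' a2 a3 y'B a2A a3A d23.
  have : [|| e y a1 && e y' a1, e y a2 && e y' a2 | e y a3 && e y' a3].
    move: h1 h2 h3 h4 h5 h6.
    by case: (e y a1); case: (e y a2); case: (e y a3); case: (e y' a1); case: (e y' a2); case: (e y' a3).
  move: yB y'B; rewrite !inB => /and4P [yS _ _ _] /and4P [y'S _ _ _].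
  have inS : forall a, a \in A -> a \in S by move=> a; rewrite inA => /andP [].
  case/or3P => /andP [ya ya'].
  - by apply: (Ht y y' a1) => //; apply: inS.
  - by apply: (Ht y y' a2) => //; apply: inS.
  - by apply: (Ht y y' a3) => //; apply: inS.
set C := [set z in S | [&& z != x, z \notin A, z \notin B & [exists y in B, e y z]]].
have inC : forall z, (z \in C) = [&& z \in S, z != x, z \notin A, z \notin B & [exists y in B, e y z]].
  by move=> z; rewrite inE.
have inS : forall a, a \in A -> a \in S by move=> a; rewrite inA => /andP [].
have BS : forall a, a \in B -> a \in S by move=> a; rewrite inB => /and4P [].
have CS : forall a, a \in C -> a \in S by move=> a; rewrite inC => /and5P [].
have toA : forall q, q \in S -> e x q -> q \in A by move=> q qS xq; rewrite inA qS.
have toB : forall p q, p \in A -> q \in S -> q != x -> q \notin A -> e p q -> q \in B.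
  by move=> p q pA qS qx qA pq; rewrite inB qS qx qA /=; apply/existsP; exists p; rewrite pA.
have toC : forall p q, p \in B -> q \in S -> q != x -> q \notin A -> q \notin B -> e p q -> q \in C.
  by move=> p q pB qS qx qA qB pq; rewrite inC qS qx qA qB /=; apply/existsP; exists p; rewrite pB.
have noA : forall z a, z \in S -> z != x -> z \notin A -> z \notin B -> a \in A -> ~~ e a z.
  move=> z a zS zx zA zB aA; apply/negP => az; move/negP: zB; apply; exact: toB az.
have xnA : forall q, q \in A -> q != x.
  by move=> q; rewrite inA => /andP [_ xq]; apply/eqP => E; subst q; rewrite Hi in xq.
have C1 : forall z q, z \in C -> q \in S -> e z q -> q \in B.
  move=> z q zC qS zq; case qB: (q \in B) => //; exfalso.
  move: (zC); rewrite inC => /and5P [zS zx zA zB /existsP [y /andP [yB yz]]].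
  have qx : q != x.
    by apply/eqP => E; subst q; move/negP: zA; apply; apply: toA => //; rewrite Hs.
  have qA : q \notin A.
    by apply/negP => qA; move/negP: zB; apply; apply: (toB q) => //; rewrite Hs.
  have yS := BS y yB.
  have F2 : forall a b, a \in A -> b \in A -> a != b -> e y a -> e y b -> False.
    move=> a b aA bA ab ya yb.
    apply: (Hf y a b q z) => //.
    - by apply: Aind.
    - by apply: noA => //; rewrite qB.
    - by apply: noA.
    - by apply: noA => //; rewrite qB.
    - by apply: noA.
    - by apply/negP => yq; apply: (Ht y z q).
  have h1 := B1 y a1 a2 yB a1A a2A d12; have h2 := B1 y a1 a3 yB a1A a3A d13.
  have h3 := B1 y a2 a3 yB a2A a3A d23.
  have : [|| e y a1 && e y a2, e y a1 && e y a3 | e y a2 && e y a3].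
    by move: h1 h2 h3; case: (e y a1); case: (e y a2); case: (e y a3).
  case/or3P => /andP [ya yb].
  - exact: (F2 a1 a2).
  - exact: (F2 a1 a3).
  - exact: (F2 a2 a3).
set X := x |: (A :|: (B :|: C)).
have Xcases : forall v, v \in X -> [\/ v = x, v \in A, v \in B | v \in C].
  move=> v; rewrite in_setU1 !in_setU => /or4P [/eqP->|||]; by [constructor 1|constructor 2|constructor 3|constructor 4].
exists X; split.
- by rewrite in_setU1 eqxx.
- exists (fun v => if v == x then 0 else if v \in A then 1 else if v \in B then 0 else 1); split.
    by move=> v _; case: ifP => //; case: ifP => //; case: ifP.
  move=> p q pX qX pq.
  have cA : forall v, v \in A -> (if v == x then 0 else if v \in A then 1 else if v \in B then 0 else 1) = 1.
    by move=> v vA; rewrite (negbTE (xnA v vA)) vA.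
  have cB : forall v, v \in B -> (if v == x then 0 else if v \in A then 1 else if v \in B then 0 else 1) = 0.
    by move=> v vB; move: (vB); rewrite {1}inB => /and4P [_ vx vA _]; rewrite (negbTE vx) (negbTE vA) vB.
  have cC : forall v, v \in C -> (if v == x then 0 else if v \in A then 1 else if v \in B then 0 else 1) = 1.
    by move=> v; rewrite inC => /and5P [_ vx vA vB _]; rewrite (negbTE vx) (negbTE vA) (negbTE vB).
  have Bx : forall v, v \in B -> ~~ e x v.
    move=> v vB; apply/negP => xv; move: vB; rewrite inB => /and4P [vS _ vA _]; move/negP: vA; apply; exact: toA.
  have Cx : forall v, v \in C -> ~~ e x v.
    move=> v vC; apply/negP => xv; move: vC; rewrite inC => /and5P [vS _ vA _ _]; move/negP: vA; apply; exact: toA.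
  have AC : forall u v, u \in A -> v \in C -> ~~ e u v.
    move=> u v uA; rewrite inC => /and5P [vS vx vA vB _]; exact: noA.
  have CC : forall u v, u \in C -> v \in C -> ~~ e u v.
    move=> u v uC vC; apply/negP => uv; have := C1 u v uC (CS v vC) uv.
    by move: vC; rewrite inC => /and5P [_ _ _ /negbTE -> _].
  case: (Xcases p pX) => [pe|pA|pB|pC]; case: (Xcases q qX) => [qe|qA|qB|qC].
  + by subst; rewrite Hi in pq.
  + by subst p; rewrite eqxx (cA q qA).
  + by subst p; move: (Bx q qB); rewrite pq.
  + by subst p; move: (Cx q qC); rewrite pq.
  + by subst q; rewrite eqxx (cA p pA).
  + by move: (Aind p q pA qA); rewrite pq.
  + by rewrite (cA p pA) (cB q qB).
  + by move: (AC p q pA qC); rewrite pq.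
  + by subst q; move: (Bx p pB); rewrite Hs pq.
  + by rewrite (cA q qA) (cB p pB).
  + by move: (B2 p q pB qB); rewrite pq.
  + by rewrite (cC q qC) (cB p pB).
  + by subst q; move: (Cx p pC); rewrite Hs pq.
  + by move: (AC q p qA pC); rewrite Hs pq.
  + by rewrite (cC p pC) (cB q qB).
  + by move: (CC p q pC qC); rewrite pq.
- move=> p q pS qS pX qX; apply/negP => pq.
  move: qX; rewrite in_setU1 !in_setU !negb_or => /and4P [qx qA qB qC].
  case: (Xcases p pX) => [pe|pA|pB|pC].
  + by subst p; move/negP: qA; apply; apply: toA.
  + by move/negP: qB; apply; apply: (toB p).
  + by move/negP: qC; apply; apply: (toC p).
  + by move/negP: qB; apply; apply: (C1 p).
Qed.


Lemma dfree_sub (T : finType) (e : rel T) (S S' : {set T}) :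
  S' \subset S -> dfree e S -> dfree e S'.
Proof. move=> /subsetP sub Hd a b c d aS bS cS dS; apply: Hd; exact: sub. Qed.

Lemma clq_sub (T : finType) (e : rel T) (S S' : {set T}) w :
  S' \subset S -> clq_le e S w -> clq_le e S' w.
Proof. move=> sub Hc K KS; apply: Hc; exact: subset_trans KS sub. Qed.

Lemma clique1 (T : finType) (e : rel T) y : is_clique e [set y].
Proof.
apply/forallP => u; apply/implyP; rewrite inE => /eqP->.
apply/forallP => v; apply/implyP; rewrite inE => /eqP->; by rewrite eqxx.
Qed.

Lemma gbound (T : finType) (e : rel T) :
  symmetric e -> irreflexive e -> forkfree e ->
  forall n w (S : {set T}), #|S| <= n -> dfree e S -> clq_le e S w.+1 -> col e S (w.*2.+1).
Proof.
move=> Hs Hi Hf; elim=> [|n IH] w S HS Hd Hc.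
  by apply: col0; apply/eqP; rewrite -cards_eq0 -leqn0.
case: (boolP [exists v in S, #|[set y in S | e v y]| <= w.*2]).
  case/existsP => v /andP [vS dv].
  apply: (col_ext Hs Hi vS) => //.
  apply: IH.
  - by move: HS; rewrite (cardsD1 v S) vS.
  - by apply: dfree_sub Hd; apply: subD1set.
  - by apply: clq_sub Hc; apply: subD1set.
move/existsPn => Hdeg'.
have Hdeg : forall v, v \in S -> w.*2 < #|[set y in S | e v y]|.
  by move=> v vS; move: (Hdeg' v); rewrite vS /= ltnNge.
case: (set_0Vmem S) => [->|[x xS]]; first by apply: col0.
case: w Hc Hdeg {Hdeg'} => [|w] Hc Hdeg.
  have := Hdeg x xS; rewrite card_gt0 => /set0Pn [y]; rewrite inE => /andP [yS xy].
  have y1 : forall u, u \in [set y] -> e x u by move=> u; rewrite inE => /eqP->.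
  have [cl cd] := clique_add Hs Hi (clique1 e y) y1.
  have sub : x |: [set y] \subset S.
    by apply/subsetP => u; rewrite !inE => /orP [/eqP->|/eqP->].
  by have := Hc _ sub cl; rewrite cd cards1.
have Ht : trifree e S.
  move=> p q r pS qS rS pq qr pr; apply: (notri Hs Hi Hf Hd Hc Hdeg pS qS rS pq pr qr).
have H3 : 2 < #|[set y in S | e x y]|.
  by apply: leq_trans (Hdeg x xS); rewrite doubleS.
have [X [xX cX sep]] := ball Hs Hi Hf Ht xS H3.
apply: (col_split Hs _ _ sep).
  by apply: col_sub cX (subxx _) _; rewrite doubleS.
apply: IH.
- have : #|S :\: X| < #|S|.
    apply: proper_card; apply/properP; split; first exact: subsetDl.
    by exists x => //; rewrite inE xX.
  by move=> h; rewrite -ltnS; apply: leq_trans h HS.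
- by apply: dfree_sub Hd; apply: subsetDl.
- by apply: clq_sub Hc; apply: subsetDl.
Qed.


Definition ccfree (T : finType) (e : rel T) := forall a b c d z : T,
  c != d -> z != a -> z != b -> z != c -> z != d ->
  e a b -> e a c -> e a d -> e b c -> e b d -> ~~ e c d ->
  ~~ e z a -> ~~ e z b -> ~~ e z c -> ~~ e z d -> False.

Definition f5 (T : Type) (x0 x1 x2 x3 x4 : T) (i : 'I_5) : T :=
  match val i with 0 => x0 | 1 => x1 | 2 => x2 | 3 => x3 | _ => x4 end.

Lemma forkfree_of (T : finType) (e : rel T) : symmetric e -> irreflexive e ->
  free_of e fork -> forkfree e.
Proof.
move=> Hs Hi Hf x0 x1 x2 x3 x4 /eqP D12 E01 E02 E04 E43 /negbTE N12 /negbTE N13 /negbTE N14 /negbTE N23 /negbTE N24 /negbTE N03.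
have E10 : e x1 x0 by rewrite Hs.
have E20 : e x2 x0 by rewrite Hs.
have E40 : e x4 x0 by rewrite Hs.
have E34 : e x3 x4 by rewrite Hs.
have N21 : e x2 x1 = false by rewrite Hs.
have N31 : e x3 x1 = false by rewrite Hs.
have N41 : e x4 x1 = false by rewrite Hs.
have N32 : e x3 x2 = false by rewrite Hs.
have N42 : e x4 x2 = false by rewrite Hs.
have N30 : e x3 x0 = false by rewrite Hs.
have I0 := Hi x0; have I1 := Hi x1; have I2 := Hi x2; have I3 := Hi x3; have I4 := Hi x4.
apply: Hf; exists (f5 x0 x1 x2 x3 x4); split.
  move=> [[|[|[|[|[|i]]]]] Hi'] [[|[|[|[|[|j]]]]] Hj] //= E; try (by apply/val_inj);
  rewrite /f5 /= in E; exfalso; subst; congruence.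
move=> [[|[|[|[|[|i]]]]] Hi'] [[|[|[|[|[|j]]]]] Hj] //=; rewrite /f5 /fork /rel_of_edges /=; congruence.
Qed.

Lemma ccfree_of (T : finType) (e : rel T) : symmetric e -> irreflexive e ->
  free_of e cocricket -> ccfree e.
Proof.
move=> Hs Hi Hf a b c d z /eqP Dcd /eqP Dza /eqP Dzb /eqP Dzc /eqP Dzd Eab Eac Ead Ebc Ebd
  /negbTE Ncd /negbTE Nza /negbTE Nzb /negbTE Nzc /negbTE Nzd.
have Eba : e b a by rewrite Hs.
have Eca : e c a by rewrite Hs.
have Eda : e d a by rewrite Hs.
have Ecb : e c b by rewrite Hs.
have Edb : e d b by rewrite Hs.
have Ndc : e d c = false by rewrite Hs.
have Naz : e a z = false by rewrite Hs.
have Nbz : e b z = false by rewrite Hs.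
have Ncz : e c z = false by rewrite Hs.
have Ndz : e d z = false by rewrite Hs.
have I0 := Hi a; have I1 := Hi b; have I2 := Hi c; have I3 := Hi d; have I4 := Hi z.
apply: Hf; exists (f5 a b c d z); split.
  move=> [[|[|[|[|[|i]]]]] Hi'] [[|[|[|[|[|j]]]]] Hj] //= E; try (by apply/val_inj);
  rewrite /f5 /= in E; exfalso; subst; congruence.
move=> [[|[|[|[|[|i]]]]] Hi'] [[|[|[|[|[|j]]]]] Hj] //=; rewrite /f5 /cocricket /rel_of_edges /=; congruence.
Qed.

Lemma mainP (T : finType) (e : rel T) :
  symmetric e -> irreflexive e -> forkfree e -> ccfree e ->
  forall w (S : {set T}), clq_le e S w -> col e S (w * w).
Proof.
move=> Hs Hi Hf Hcc; elim=> [|w IH] S Hc.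
  case: (set_0Vmem S) => [->|[x xS]]; first by apply: col0.
  have sub : [set x] \subset S by rewrite sub1set.
  by have := Hc _ sub (clique1 e x); rewrite cards1.
case: (set_0Vmem S) => [->|[a aS]]; first by apply: col0.
set N := [set y in S | e a y].
have cN : col e N (w * w).
  apply: IH => K KN cK.
  have aK : forall y, y \in K -> e a y.
    by move=> y /(subsetP KN); rewrite inE => /andP [].
  have [cl cd] := clique_add Hs Hi cK aK.
  have sub : a |: K \subset S.
    apply/subsetP => u; rewrite !inE => /orP [/eqP->//|/(subsetP KN)]; by rewrite inE => /andP [].
  by have := Hc _ sub cl; rewrite cd ltnS.
set R := (S :\: N) :\ a.
have RS : R \subset S by apply: subset_trans (subD1set _ _) (subsetDl _ _).
have inR : forall y, y \in R -> [/\ y \in S, y != a & ~~ e a y].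
  move=> y; rewrite !inE => /andP [ya /andP [yN yS]]; split => //; by move: yN; rewrite yS.
have dR : dfree e R.
  move=> p q r s pR qR rR sR rs pq pr ps qr qs.
  apply/negPn/negP => nrs.
  have [_ pa ap] := inR p pR; have [_ qa aq] := inR q qR.
  have [_ ra ar] := inR r rR; have [_ sa as'] := inR s sR.
  by apply: (Hcc p q r s a rs) => //; rewrite eq_sym.
have cR : col e R (w.*2.+1).
  apply: (gbound Hs Hi Hf (leqnn #|R|) dR).
  exact: clq_sub RS Hc.
have cSN : col e (S :\: N) (w.*2.+1).
  have aSN : a \in S :\: N by rewrite !inE aS Hi.
  apply: (col_ext Hs Hi aSN).
    rewrite (_ : [set y in S :\: N | e a y] = set0) ?cards0 //.
    apply/setP => y; rewrite !inE; by case: (e a y); case: (y \in S).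

  exact: cR.
have := col_union cN cSN (_ : S \subset N :|: (S :\: N)).
move/(_ _)/col_sub => h; apply: h.
- by apply/subsetP => y yS; rewrite !inE yS; case: (e a y).
- by apply: subxx.
- by rewrite -addnn; lia.
Qed.

Theorem corollary3p18 (T : finType) (e : rel T) :
  simple_graph e -> free_of e fork -> free_of e cocricket ->
  forall chi : nat, is_chromatic_number e chi ->
  chi <= clique_number e ^ 2.
Proof.
move=> [Hs Hi] Hfork Hcc chi [_ Hmin].
have Hf := forkfree_of Hs Hi Hfork.
have Hc := ccfree_of Hs Hi Hcc.
set w := clique_number e.
have cl : clq_le e [set: T] w.
  move=> K _ cK; rewrite /w /clique_number.
  exact: (@leq_bigmax_cond _ (fun K0 : {set T} => is_clique e K0) (fun K0 : {set T} => #|K0|) K cK).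
have [c [Hb Hp]] := mainP Hs Hi Hf Hc cl.
apply: Hmin.
have Hb' : forall x, c x < w ^ 2 by move=> x; rewrite expnS expn1; apply: Hb; rewrite inE.
exists (fun x => Ordinal (Hb' x)) => x y exy /=.
by apply: Hp; rewrite ?inE.
Qed.
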